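(* If $T$ is a decomposable operator on $L^2(\mathbb{D},\mathbb{C}^n)$ with $T^*(L_a^2(\mathbb{D},\mathbb{C}^n))\subseteq L_a^2(\mathbb{D},\mathbb{C}^n)$, then for each fixed $u\in\mathbb{C}^n$ the map $\tilde F:\mathbb{D}\to\mathbb{C}^n$, $\tilde F(\lambda)=T_\lambda^*u$, is holomorphic.
   Context: $L^2(\mathbb{D},\mathbb{C}^n)$ is the space of $\mathbb{C}^n$-valued functions on the unit disc square integrable for area measure; $L_a^2(\mathbb{D},\mathbb{C}^n)$ is its subspace of holomorphic functions. An operator $T$ on $L^2(\mathbb{D},\mathbb{C}^n)$ is decomposable if there is a weakly measurable function $\lambda\mapsto T_\lambda\in\mathcal{L}(\mathbb{C}^n)$ with $(Tf)(\lambda)=T_\lambda f(\lambda)$ for a.e. $\lambda$, for all $f$; then $(T^*f)(\lambda)=T_\lambda^*f(\lambda)$. *)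

(* Defs.v *)
From HB Require Import structures.
From mathcomp Require Import all_boot all_order all_algebra.
From mathcomp Require Import all_classical all_reals all_analysis.
From mathcomp Require Import complex.
Set Implicit Arguments.
Unset Strict Implicit.
Unset Printing Implicit Defensive.
Import Order.TTheory GRing.Theory Num.Theory ComplexField.
Import numFieldNormedType.Exports.
Local Open Scope classical_set_scope.
Local Open Scope ring_scope.

Section Defs.
Variable R : realType.

Local Notation Cplx := (R[i])%C.

(** Identification of R x R with C (area measure = product Lebesgue measure). *)
Definition toC (p : R * R) : Cplx := (p.1 +i* p.2)%C.

Definition disc : set Cplx := [set z | `|z| < 1].
Definition discR : set (R * R) := [set p | p.1 ^+ 2 + p.2 ^+ 2 < 1].

Definition area := (@lebesgue_measure R \x @lebesgue_measure R)%E.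

Definition vnorm2 (n : nat) (v : 'cV[Cplx]_n) : R :=
  \sum_(i < n) (complex.Re (v i ord0) ^+ 2 + complex.Im (v i ord0) ^+ 2).

Definition measurable_vfun (n : nat) (f : Cplx -> 'cV[Cplx]_n) : Prop :=
  forall i : 'I_n,
    measurable_fun discR (fun p => complex.Re (f (toC p) i ord0)) /\
    measurable_fun discR (fun p => complex.Im (f (toC p) i ord0)).

Definition L2 (n : nat) (f : Cplx -> 'cV[Cplx]_n) : Prop :=
  measurable_vfun f /\
  (\int[area]_(p in discR) (vnorm2 (f (toC p)))%:E < +oo)%E.

(** f is holomorphic on D: each coordinate is complex differentiable at
    every point of D (derivative along direction 1 in the C-normed space C). *)
Definition holomorphic_on_disc (n : nat) (f : Cplx -> 'cV[Cplx]_n) : Prop :=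
  forall (i : 'I_n) (z : Cplx), disc z ->
    derivable ((fun w : Cplx => f w i ord0) : Cplx^o -> Cplx^o) z 1.

Definition L2a (n : nat) (f : Cplx -> 'cV[Cplx]_n) : Prop :=
  L2 f /\ holomorphic_on_disc f.

Definition ae_disc (n : nat) (f g : Cplx -> 'cV[Cplx]_n) : Prop :=
  {ae area, forall p, discR p -> f (toC p) = g (toC p)}.

Definition adjmx (m n : nat) (A : 'M[Cplx]_(m, n)) : 'M[Cplx]_(n, m) :=
  (map_mx (fun z : Cplx => z^*%C) A)^T.

Definition weakly_measurable (n : nat) (Tl : Cplx -> 'M[Cplx]_n) : Prop :=
  forall x y : 'cV[Cplx]_n,
    measurable_fun discR (fun p => complex.Re (((adjmx y) *m (Tl (toC p) *m x)) ord0 ord0)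
                          : R)
    /\ measurable_fun discR
         (fun p => complex.Im (((adjmx y) *m (Tl (toC p) *m x)) ord0 ord0) : R).

Definition decomposable (n : nat)
    (T : (Cplx -> 'cV[Cplx]_n) -> (Cplx -> 'cV[Cplx]_n))
    (Tl : Cplx -> 'M[Cplx]_n) : Prop :=
  weakly_measurable Tl /\
  forall f, L2 f -> L2 (T f) /\ ae_disc (T f) (fun l => Tl l *m f l).

Definition Tstar_apply (n : nat) (Tl : Cplx -> 'M[Cplx]_n)
    (f : Cplx -> 'cV[Cplx]_n) : Cplx -> 'cV[Cplx]_n :=
  fun l => adjmx (Tl l) *m f l.

(** T^*(L^2_a) is contained in L^2_a: for every f in L^2_a, the element
    T^* f of L^2 has a representative lying in L^2_a. *)
Definition Tstar_preserves_L2a (n : nat) (Tl : Cplx -> 'M[Cplx]_n) : Prop :=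
  forall f : Cplx -> 'cV[Cplx]_n,
    L2a f -> exists g, L2a g /\ ae_disc g (Tstar_apply Tl f).

End Defs.

(* Main.v *)
Require Import Defs.
From HB Require Import structures.
From mathcomp Require Import all_boot all_order all_algebra.
From mathcomp Require Import all_classical all_reals all_analysis.
From mathcomp Require Import complex.
Import Order.TTheory GRing.Theory Num.Theory ComplexField.
Import numFieldNormedType.Exports.
Local Open Scope classical_set_scope.
Local Open Scope ring_scope.

Lemma discR_meas (R : realType) :
  measurable (@discR R : set (measurableTypeR R * measurableTypeR R)).
Proof.
have hf : measurable_fun setT (fun p : measurableTypeR R * measurableTypeR R => p.1 ^+ 2 + p.2 ^+ 2).
  by apply: measurable_realfun.measurable_funD; apply: measurable_realfun.measurable_funX;
    [exact: measurable_fst | exact: measurable_snd].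
have := hf measurableT _ (measurable_itv `]-oo, 1[).
rewrite setTI; congr measurable; apply/seteqP; split => p /=;
  by rewrite /discR /= in_itv /=.
Qed.

Lemma discR_fin (R : realType) : (@area R (@discR R) < +oo)%E.
Proof.
pose S : set (measurableTypeR R) := [set` `[-1, 1]%R].
have sub : @discR R `<=` S `*` S.
  move=> [x y]; rewrite /discR /S /= => h; split => /=; rewrite in_itv /= -ler_norml.
  - rewrite -(@ler_pXn2r _ 2) ?nnegrE //; rewrite real_normK ?num_real //.
    by apply: ltW; rewrite expr1n; apply: (le_lt_trans _ h); rewrite lerDl sqr_ge0.
  - rewrite -(@ler_pXn2r _ 2) ?nnegrE //; rewrite real_normK ?num_real //.
    by apply: ltW; rewrite expr1n; apply: (le_lt_trans _ h); rewrite lerDr sqr_ge0.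
have mS0 : measurable S by exact: measurable_itv.
have := le_measure (@area R) _ _ sub.
rewrite !inE; move=> /(_ (discR_meas R)).
have mS : measurable (S `*` S) by apply: measurableX.
move=> /(_ mS) H.
suff : (@area R (S `*` S) < +oo)%E by exact: le_lt_trans H.
have E : @area R (S `*` S) = (@lebesgue_measure R S * @lebesgue_measure R S)%E.
  by apply: product_measure1E.
rewrite E /S.
rewrite lebesgue_measure_itv /= lte_fin gtrN // -EFinD -EFinM; exact: ltry.
Qed.

Theorem mainTheorem8 (R : realType) (n : nat)
    (T : (R[i] -> 'cV[R[i]]_n) -> (R[i] -> 'cV[R[i]]_n))
    (Tl : R[i] -> 'M[R[i]]_n) :
  decomposable T Tl ->
  Tstar_preserves_L2a Tl ->
  forall u : 'cV[R[i]]_n,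
    exists G : R[i] -> 'cV[R[i]]_n,
      holomorphic_on_disc G /\ ae_disc G (fun l => adjmx (Tl l) *m u).
Proof.
move=> _ Hpres u.
have hf : L2a (fun _ : R[i] => u).
  split; last by move=> i z _; exact: derivable_cst.
  split.
    by move=> i; split; exact: measurable_cst.
  rewrite (integral_cst _ (discR_meas R)).
  apply: lte_mul_pinfty => //; last exact: discR_fin.
  rewrite lee_fin /vnorm2; apply: sumr_ge0 => i _.
  by apply: addr_ge0; exact: sqr_ge0.
have [g [hg ag]] := Hpres _ hf.
by exists g; split; [exact: hg.2 | exact: ag].
Qed.
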